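(* Let $m$ be a positive integer, $T=\{1,2\}^m$, and $d$ an integer with $4\le d\le m/2$. Then for every $r\in T$, the number of vectors $s\in T\setminus\{r\}$ with $d_{\mathrm{ERP}}(r,s)\le d$ is less than $\big(\frac{3em}{d}\big)^{2d}$.
   Context: Edit Distance with Real Penalty (ERP): for finite real sequences $r,s$ (possibly of different lengths), let $m'$ be the length of the longer one. A gap insertion inserts a zero-valued coordinate at any position. For $p\ge m'$ let $R_p$ (resp. $S_p$) be the set of length-$p$ sequences obtainable from $r$ (resp. $s$) by gap insertions. Then $d_{\mathrm{ERP}}(r,s)=\min_{p\ge m',\ \tilde r\in R_p,\ \tilde s\in S_p}\|\tilde r-\tilde s\|_1$. *)

(* Defs.v *)
From Stdlib Require Import Reals List.
Import ListNotations.
Open Scope R_scope.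

(* gap_ins r r' : r' is obtainable from r by inserting zero-valued
   coordinates at arbitrary positions (gap insertions). *)
Inductive gap_ins : list R -> list R -> Prop :=
| gi_nil : gap_ins [] []
| gi_gap : forall r r', gap_ins r r' -> gap_ins r (0 :: r')
| gi_keep : forall x r r', gap_ins r r' -> gap_ins (x :: r) (x :: r').

(* L1 distance of two sequences (used on sequences of equal length). *)
Definition l1_dist (a b : list R) : R :=
  fold_right Rplus 0 (map (fun q => Rabs (fst q - snd q)) (combine a b)).

(* Candidates in the minimum defining d_ERP: p >= m' (max length),
   rt in R_p, st in S_p. *)
Definition erp_candidate (r s : list R) (p : nat) (rt st : list R) : Prop :=
  (Nat.max (length r) (length s) <= p)%nat /\
  gap_ins r rt /\ length rt = p /\ gap_ins s st /\ length st = p.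

(* erp_is r s v : v = d_ERP(r,s), i.e. v is the minimum of ||rt - st||_1
   over all candidates (attained and a lower bound). *)
Definition erp_is (r s : list R) (v : R) : Prop :=
  (exists p rt st, erp_candidate r s p rt st /\ l1_dist rt st = v) /\
  (forall p rt st, erp_candidate r s p rt st -> v <= l1_dist rt st).

Definition in_T (m : nat) (x : list R) : Prop :=
  length x = m /\ Forall (fun a => a = 1 \/ a = 2) x.

(* Main.v *)
Require Import Defs.
From Stdlib Require Import Reals List.
From Stdlib Require Import Lra Lia Psatz Arith.
Import ListNotations.
Open Scope R_scope.

Fixpoint cand (c : nat) (r : list R) : list (list R) :=
  match c with
  | O => [r]
  | S c' =>
    (fix g (r : list R) : list (list R) :=
      match r with
      | [] => [] :: (map (cons 1) (cand c' []) ++ map (cons 2) (cand c' []))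
      | x :: r' => map (cons x) (g r') ++ cand c' r' ++ map (cons 1) (cand c' r')
                   ++ map (cons 2) (cand c' r')
                   ++ map (cons 1) (cand c' (x::r')) ++ map (cons 2) (cand c' (x::r'))
      end) r
  end.

Lemma cand_S_nil c : cand (S c) [] =
  [] :: (map (cons 1) (cand c []) ++ map (cons 2) (cand c [])).
Proof. reflexivity. Qed.

Lemma cand_S_cons c x r : cand (S c) (x :: r) =
  map (cons x) (cand (S c) r) ++ cand c r ++ map (cons 1) (cand c r)
    ++ map (cons 2) (cand c r)
    ++ map (cons 1) (cand c (x::r)) ++ map (cons 2) (cand c (x::r)).
Proof. reflexivity. Qed.

Definition two (a : R) : Prop := a = 1 \/ a = 2.

Lemma l1_nonneg : forall a b, 0 <= l1_dist a b.
Proof.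
  induction a as [|x a IH]; intros [|y b]; unfold l1_dist; simpl; try lra.
  fold (l1_dist a b). pose proof (Rabs_pos (x - y)). specialize (IH b). lra.
Qed.

Lemma l1_cons a b x y : l1_dist (x :: a) (y :: b) = Rabs (x - y) + l1_dist a b.
Proof. reflexivity. Qed.

Lemma two_ne0 a : two a -> 1 <= Rabs (a - 0) /\ 1 <= Rabs (0 - a).
Proof. intros [-> | ->]; unfold Rabs; split; destruct (Rcase_abs _); lra. Qed.

Lemma two_diff a b : two a -> two b -> a <> b -> 1 <= Rabs (a - b).
Proof. intros [-> | ->] [-> | ->] H; try (exfalso; lra); unfold Rabs; destruct (Rcase_abs _); lra. Qed.

Lemma INR_ge1 c x : 1 <= x -> x <= INR c -> exists c', c = S c'.
Proof. destruct c as [|c']; simpl; intros; [lra | eauto]. Qed.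

Lemma key : forall rt st r s c, length rt = length st -> gap_ins r rt -> gap_ins s st ->
  Forall two r -> Forall two s -> l1_dist rt st <= INR c -> In s (cand c r).
Proof.
  induction rt as [|a rt IH]; intros st r s c Hl Hr Hs Fr Fs Hd.
  - destruct st; [|discriminate]. inversion Hr; inversion Hs; subst.
    destruct c; simpl; auto.
  - destruct st as [|b st]; [discriminate|]. simpl in Hl. injection Hl as Hl.
    rewrite l1_cons in Hd. pose proof (l1_nonneg rt st) as H0.
    inversion Hr as [|? ? Hr1|? r0 ? Hr1]; subst; inversion Hs as [|? ? Hs1|? s0 ? Hs1]; subst.
    +
      replace (Rabs (0-0)) with 0 in Hd by (rewrite Rminus_diag, Rabs_R0; auto).
      apply IH with st; auto. lra.
    +
      inversion Fs as [|? ? Tb Fs']; subst.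
      destruct (two_ne0 b Tb) as [_ Hb].
      destruct (INR_ge1 c (Rabs (0 - b) + l1_dist rt st)) as [c' ->]; [lra|lra|].
      rewrite S_INR in Hd.
      assert (IHs : In s0 (cand c' r)) by (apply IH with st; auto; lra).
      destruct r as [|x r0].
      * rewrite cand_S_nil. right. destruct Tb as [-> | ->];
          [apply in_or_app; left | apply in_or_app; right]; apply in_map; auto.
      * rewrite cand_S_cons. do 4 (apply in_or_app; right).
        destruct Tb as [-> | ->];
          [apply in_or_app; left | apply in_or_app; right]; apply in_map; auto.
    +
      inversion Fr as [|? ? Ta Fr']; subst.
      destruct (two_ne0 a Ta) as [Ha _].
      destruct (INR_ge1 c (Rabs (a - 0) + l1_dist rt st)) as [c' ->]; [lra|lra|].
      rewrite S_INR in Hd.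
      assert (IHs : In s (cand c' r0)) by (apply IH with st; auto; lra).
      rewrite cand_S_cons. apply in_or_app; right. apply in_or_app; left. auto.
    +
      inversion Fr as [|? ? Ta Fr']; subst. inversion Fs as [|? ? Tb Fs']; subst.
      destruct (Req_dec a b) as [<- | Hab].
      * replace (Rabs (a-a)) with 0 in Hd by (rewrite Rminus_diag, Rabs_R0; auto).
        assert (IHs : In s0 (cand c r0)) by (apply IH with st; auto; lra).
        destruct c as [|c'].
        -- simpl in IHs. destruct IHs as [-> | []]. simpl; auto.
        -- rewrite cand_S_cons. apply in_or_app; left. apply in_map; auto.
      * pose proof (two_diff a b Ta Tb Hab).
        destruct (INR_ge1 c (Rabs (a - b) + l1_dist rt st)) as [c' ->]; [lra|lra|].
        rewrite S_INR in Hd.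
        assert (IHs : In s0 (cand c' r0)) by (apply IH with st; auto; lra).
        rewrite cand_S_cons. do 2 (apply in_or_app; right).
        destruct Tb as [-> | ->];
          [apply in_or_app; left | apply in_or_app; right; apply in_or_app; left];
          apply in_map; auto.
Qed.

Fixpoint binom (n k : nat) : nat :=
  match k, n with
  | O, _ => 1%nat
  | S _, O => 0%nat
  | S k', S n' => (binom n' k' + binom n' (S k'))%nat
  end.


Lemma binom_gt : forall n k, (n < k)%nat -> binom n k = 0%nat.
Proof.
  induction n; intros [|k] H; simpl; try lia.
  rewrite !IHn; lia.
Qed.

Lemma binom_nn : forall n, binom n n = 1%nat.
Proof. induction n; simpl; auto. rewrite IHn, binom_gt; lia. Qed.

Lemma binom_mono : forall n k, (binom n k <= binom (S n) k)%nat.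
Proof. intros n [|k]. destruct n; simpl; lia. change (binom (S n) (S k)) with (binom n k + binom n (S k))%nat. lia. Qed.

Lemma binom_n0 n : binom n 0 = 1%nat.
Proof. destruct n; reflexivity. Qed.

Lemma cand_len : forall c r, (length (cand c r) <= 5 ^ c * binom (length r + c) c)%nat.
Proof.
  induction c as [|c IHc]; intros r.
  - simpl. rewrite binom_n0. lia.
  - induction r as [|x r IHr].
    + rewrite cand_S_nil. simpl length at 1. rewrite length_app, !length_map.
      specialize (IHc []). simpl length in *. simpl Nat.add in *. rewrite !binom_nn in *.
      assert (1 <= 5 ^ c)%nat by (pose proof (Nat.pow_le_mono_r 5 0 c); simpl in *; lia).
      simpl Nat.pow. lia.
    + rewrite cand_S_cons. rewrite !length_app, !length_map.
      pose proof (IHc r) as A. pose proof (IHc (x :: r)) as B.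
      change (length (x::r)) with (S (length r)) in *.
      replace (S (length r) + S c)%nat with (S (length r + S c))%nat by lia.
      replace (S (length r) + c)%nat with (S (length r + c))%nat in B by lia.
      replace (length r + S c)%nat with (S (length r + c))%nat in * by lia.
      pose proof (binom_mono (length r + c) c).
      change (binom (S (S (length r + c))) (S c)) with (binom (S (length r + c)) c + binom (S (length r + c)) (S c))%nat.
      remember (5 ^ c)%nat as P. simpl Nat.pow. rewrite <- HeqP.
      simpl Nat.pow in IHr. rewrite <- HeqP in IHr. nia.
Qed.

Lemma bern : forall n k, (n ^ S k + S k * n ^ k <= (S n) ^ S k)%nat.
Proof.
  intros n k. induction k as [|k IH].
  - simpl. lia.
  - change (n ^ S (S k))%nat with (n * n ^ S k)%nat.
    change (S n ^ S (S k))%nat with (S n * S n ^ S k)%nat.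
    change (n ^ S k)%nat with (n * n ^ k)%nat in *.
    nia.
Qed.

Lemma binom_fact : forall n k, (binom n k * fact k <= n ^ k)%nat.
Proof.
  induction n as [|n IH]; intros [|k].
  - simpl. lia.
  - simpl. lia.
  - rewrite binom_n0. simpl. lia.
  - change (binom (S n) (S k)) with (binom n k + binom n (S k))%nat.
    change (fact (S k)) with (S k * fact k)%nat.
    pose proof (IH k) as A. pose proof (IH (S k)) as B.
    change (fact (S k)) with (S k * fact k)%nat in B.
    pose proof (bern n k).
    nia.
Qed.

Lemma exp_pow_n : forall x n, exp x ^ n = exp (INR n * x).
Proof.
  intros x n; induction n as [|n IH].
  - simpl. rewrite Rmult_0_l, exp_0. reflexivity.
  - rewrite S_INR. simpl pow. rewrite IH, <- exp_plus. f_equal. ring.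
Qed.

Lemma fact_lb : forall k, INR k ^ k <= exp 1 ^ k * INR (fact k).
Proof.
  induction k as [|k IH].
  - simpl. lra.
  - assert (C : INR (S k) ^ k <= exp 1 * INR k ^ k).
    { destruct k as [|k'].
      - simpl. pose proof (exp_ineq1_le 1). lra.
      - set (K := INR (S k')).
        assert (HK : 0 < K) by (apply lt_0_INR; lia).
        assert (E : INR (S (S k')) <= K * exp (1 / K)).
        { rewrite S_INR. fold K. pose proof (exp_ineq1_le (1 / K)).
          replace K with (K * 1) at 1 by ring.
          replace (K * 1 + 1) with (K * (1 + 1 / K)) by (field; lra).
          apply Rmult_le_compat_l; lra. }
        assert (E2 : INR (S (S k')) ^ S k' <= (K * exp (1 / K)) ^ S k').
        { apply pow_incr. split; [apply pos_INR | exact E]. }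
        rewrite Rpow_mult_distr, exp_pow_n in E2. fold K in E2.
        replace (K * (1 / K)) with 1 in E2 by (field; lra).
        lra. }
    change (fact (S k)) with (S k * fact k)%nat.
    rewrite mult_INR. simpl pow.
    pose proof (pos_INR (S k)). pose proof (exp_pos 1).
    assert (D : INR (S k) ^ k <= exp 1 * (exp 1 ^ k * INR (fact k))).
    { apply Rle_trans with (1 := C). apply Rmult_le_compat_l; lra. }
    apply Rmult_le_compat_l with (r := INR (S k)) in D; [|lra].
    replace (exp 1 * exp 1 ^ k * (INR (S k) * INR (fact k))) with (INR (S k) * (exp 1 * (exp 1 ^ k * INR (fact k)))) by ring.
    exact D.
Qed.

Lemma pow_lt_strict : forall a b n, 0 <= a < b -> (1 <= n)%nat -> a ^ n < b ^ n.
Proof.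
  intros a b n [Ha Hab] Hn. destruct n as [|n]; [lia|]. clear Hn.
  induction n as [|n IH].
  - simpl. lra.
  - change (a ^ S (S n)) with (a * a ^ S n). change (b ^ S (S n)) with (b * b ^ S n).
    assert (0 <= a ^ S n) by (apply pow_le; lra).
    apply Rle_lt_trans with (b * a ^ S n).
    + apply Rmult_le_compat_r; lra.
    + apply Rmult_lt_compat_l; lra.
Qed.

Theorem mainTheorem9 (m d : nat) (r : list R) (L : list (list R)) :
  (0 < m)%nat -> (4 <= d)%nat -> (2 * d <= m)%nat ->
  in_T m r ->
  NoDup L ->
  (forall s, In s L <->
     (in_T m s /\ s <> r /\ exists v, erp_is r s v /\ v <= INR d)) ->
  INR (length L) < (3 * exp 1 * INR m / INR d) ^ (2 * d).
Proof.
  intros Hm Hd4 Hdm [Hlr Fr] HND HL.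
  assert (Hinc : incl L (cand d r)).
  { intros s Hs. apply HL in Hs as [[_ Fs] [_ [v [[[p [rt [st [[_ [g1 [l1 [g2 l2]]]] Hv]]]] _] Hvd]]]].
    apply key with rt st; auto. congruence. lra. }
  pose proof (NoDup_incl_length HND Hinc) as H1.
  pose proof (cand_len d r) as H2. rewrite Hlr in H2.
  set (B := binom (m + d) d) in *.
  pose proof (binom_fact (m + d) d) as H3. fold B in H3.
  apply le_INR in H3. rewrite mult_INR, pow_INR, plus_INR in H3.
  pose proof (fact_lb d) as H4.
  set (M := INR m) in *. set (D := INR d) in *. set (F := INR (fact d)) in *.
  set (e := exp 1) in *.
  assert (He : 2 < e) by (unfold e; pose proof (exp_ineq1 1); lra).
  assert (HD : 4 <= D) by (unfold D; replace 4 with (INR 4) by (simpl; lra); apply le_INR; lia).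
  assert (HMD : 2 * D <= M) by (unfold M, D; replace 2 with (INR 2) by (simpl; lra); rewrite <- mult_INR; apply le_INR; lia).
  assert (HF : 0 < F) by (unfold F; apply lt_0_INR, lt_O_fact).
  assert (HB : 0 <= INR B) by apply pos_INR.
  assert (HDd : 0 < D ^ d) by (apply pow_lt; lra).
  assert (HLB : INR (length L) <= 5 ^ d * INR B).
  { apply le_INR in H1. apply le_INR in H2. rewrite mult_INR, pow_INR in H2.
    replace (INR 5) with 5 in H2 by (simpl; lra). lra. }
  assert (S1 : INR B * D ^ d <= e ^ d * (M + D) ^ d).
  { apply Rle_trans with (INR B * (e ^ d * F)).
    - apply Rmult_le_compat_l; auto.
    - replace (INR B * (e ^ d * F)) with (e ^ d * (INR B * F)) by ring.
      apply Rmult_le_compat_l; [apply pow_le; lra | auto]. }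
  set (X := 5 * e * (M + D)).
  set (Y := (3 * e * M / D) ^ 2 * D).
  assert (XY : X < Y).
  { unfold X, Y. replace ((3 * e * M / D) ^ 2 * D) with (9 * e * e * M * M / D) by (field; lra).
    apply Rmult_lt_reg_r with D; [lra|].
    replace (9 * e * e * M * M / D * D) with (9 * e * e * M * M) by (field; lra).
    assert (5 * D * (M + D) < 9 * e * M * M) by nra.
    nra. }
  assert (XYd : X ^ d < Y ^ d) by (apply pow_lt_strict; [split; [unfold X; nra | auto] | lia]).
  unfold X, Y in XYd. rewrite !Rpow_mult_distr, <- pow_mult in XYd.
  replace (2 * d)%nat with (2 * d)%nat in XYd by lia.
  apply Rmult_lt_reg_r with (D ^ d); [auto|].
  apply Rle_lt_trans with (5 ^ d * INR B * D ^ d).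
  - apply Rmult_le_compat_r; lra.
  - apply Rle_lt_trans with (5 ^ d * (e ^ d * (M + D) ^ d)).
    + rewrite Rmult_assoc. apply Rmult_le_compat_l; [apply pow_le; lra | auto].
    + eapply Rle_lt_trans; [|exact XYd]. right. ring.
Qed.
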